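(* Let $n\ge1$, $s\in\{1,\dots,n\}$ and let $C\in\mathbb{R}^{n\times n}$ be symmetric positive definite. For all $t_1,t_2$ with $0<t_1\le t_2\le\lambda_{\min}(C)$, $\hat z^D(t_1)\ge\hat z^D(t_2)$.
   Context: $\lambda_{\min}(C)$ is the smallest eigenvalue of $C$. For $0\le t\le\lambda_{\min}(C)$ let $A(t)\in\mathbb{R}^{n\times n}$ be a Cholesky factor of $C-tI$ (so $C-tI=A(t)^\top A(t)$), with $i$-th column $a_i(t)$, and for $x\in[0,1]^n$ let $M_t(x)=\sum_i x_i a_i(t)a_i(t)^\top$. For $t>0$, $\hat z^D(t)=\max\{\log\det(M_t(x)+tI) : x\in[0,1]^n,\ \sum_i x_i=s\}-(n-s)\log(t)$ (natural log). *)

(* Defs.v *)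
From HB Require Import structures.
From mathcomp Require Import all_boot all_order all_algebra.
From mathcomp Require Import classical_sets reals exp.
Set Implicit Arguments. Unset Strict Implicit. Unset Printing Implicit Defensive.
Import Order.TTheory GRing.Theory Num.Theory.
Local Open Scope classical_set_scope.
Local Open Scope ring_scope.

Section Defs.
Variable R : realType.

Definition sym_mx n (C : 'M[R]_n) : Prop := C^T = C.
Definition posdef_mx n (C : 'M[R]_n) : Prop :=
  forall v : 'cV[R]_n, v != 0 -> 0 < (v^T *m C *m v) 0 0.

Definition is_lambda_min n (C : 'M[R]_n) (lam : R) : Prop :=
  eigenvalue C lam /\ forall mu, eigenvalue C mu -> lam <= mu.

Definition factor_of n (C : 'M[R]_n) (t : R) (A : 'M[R]_n) : Prop :=
  C - t%:M = A^T *m A.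

Definition Mx n (A : 'M[R]_n) (x : 'I_n -> R) : 'M[R]_n :=
  \sum_(i < n) x i *: (col i A *m (col i A)^T).

Definition feasible n (s : nat) (x : 'I_n -> R) : Prop :=
  (forall i, 0 <= x i <= 1) /\ \sum_(i < n) x i = s%:R.

Definition zhatD n (s : nat) (A : 'M[R]_n) (t : R) : R :=
  reals.sup [set y | exists x, feasible s x /\ y = ln (\det (Mx A x + t%:M))]
  - (n - s)%:R * ln t.
End Defs.

(* Main.v *)
Require Import Defs.
From HB Require Import structures.
From mathcomp Require Import all_boot all_order all_algebra.
From mathcomp Require Import classical_sets reals exp.
From mathcomp Require Import ring lra perm.
Set Implicit Arguments. Unset Strict Implicit.
Import Order.TTheory GRing.Theory Num.Theory.
Local Open Scope ring_scope.

Section Aux.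
Variable R : realType.

Definition quad n (M : 'M[R]_n) (v : 'cV[R]_n) : R := (v^T *m M *m v) 0 0.

Lemma quad_id_gt0 n (v : 'cV[R]_n) : v != 0 -> 0 < quad 1%:M v.
Proof.
move=> vn0; rewrite /quad mulmx1 !mxE.
have [i vi] : exists i, v i 0 != 0.
  apply/existsP; move: vn0; apply: contraR; rewrite negb_exists => /forallP H.
  apply/eqP/matrixP => i j; rewrite (ord1 j) mxE; exact/eqP/negPn/H.
rewrite (bigD1 i) //= ltr_wpDr //.
  by apply: sumr_ge0 => j _; rewrite mxE sqr_ge0.
by rewrite mxE lt_def sqr_ge0 andbT mulf_neq0.
Qed.

Lemma quad_detN0 n (M : 'M[R]_n) :
  (forall v, v != 0 -> 0 < quad M v) -> \det M != 0.
Proof.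
move=> H; apply/negP => /det0P [v vn0 vM].
have := H v^T; rewrite trmx_eq0 vn0 /quad trmxK vM mul0mx mxE => /(_ isT).
by rewrite ltxx.
Qed.

Lemma quadD n (M N : 'M[R]_n) v : quad (M + N) v = quad M v + quad N v.
Proof. by rewrite /quad mulmxDr mulmxDl mxE. Qed.

Lemma quadZ n a (M : 'M[R]_n) v : quad (a *: M) v = a * quad M v.
Proof. by rewrite /quad -scalemxAr -scalemxAl mxE. Qed.

Lemma psd_det_ge0 n (M : 'M[R]_n) :
  (forall v, 0 <= quad M v) -> 0 <= \det M.
Proof.
move=> H; rewrite leNgt; apply/negP => dM.
pose P : 'M[{poly R}]_n := map_mx polyC 1%:M + 'X *: map_mx polyC (M - 1%:M).
have PE s : (- \det P).[s] = - \det (1%:M + s *: (M - 1%:M)).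
  rewrite hornerN; congr (- _).
  rewrite -[LHS]/(horner_eval s (\det P)) -det_map_mx; congr (\det _).
  by apply/matrixP => i j; rewrite !mxE /= horner_evalE !hornerE.
have [x /andP [x0 x1] rx] : exists2 x, 0 <= x <= 1 & root (- \det P) x.
  apply: poly_ivt => //; rewrite !PE scale0r addr0 det1 scale1r addrC subrK.
  by rewrite lerN10 /= oppr_ge0 ltW.
move: rx; rewrite /root PE oppr_eq0; apply/negP.
have [x1'|xlt1] := eqVneq x 1.
  by rewrite x1' scale1r addrC subrK lt_eqF.
apply: quad_detN0 => v vn0.
rewrite quadD quadZ quadD (_ : quad (- 1%:M) v = - quad 1%:M v); last first.
  by rewrite /quad mulmxN mulNmx mxE.
have q1 := quad_id_gt0 vn0.
have xl : x < 1 by rewrite lt_neqAle xlt1 x1.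
have := H v. nra.
Qed.

Lemma pd_det_gt0 n (M : 'M[R]_n) :
  (forall v, v != 0 -> 0 < quad M v) -> 0 < \det M.
Proof.
move=> H; rewrite lt_def quad_detN0 // psd_det_ge0 // => v.
have [->|/H/ltW//] := eqVneq v 0.
by rewrite /quad mulmx0 mxE.
Qed.
Lemma sylvester n (U V : 'M[R]_n) (t : R) : t != 0 ->
  \det (U *m V + t%:M) = \det (V *m U + t%:M).
Proof.
move=> t0.
have E1 : block_mx 1%:M (-U) 0 1%:M *m block_mx (U *m V + t%:M) 0 V 1%:M
          = block_mx (t%:M) (-U) V 1%:M.
  rewrite mulmx_block ?mul1mx ?mul0mx ?mulmx0 ?mulmx1 ?addr0 ?add0r mulNmx.
  by rewrite addrC addKr.
have E2 : block_mx 1%:M 0 (t^-1 *: V) 1%:M *m block_mx (t%:M) (-U) 0 (1%:M + t^-1 *: (V *m U))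
          = block_mx (t%:M) (-U) V 1%:M.
  rewrite mulmx_block ?mul1mx ?mul0mx ?mulmx0 ?addr0 ?add0r.
  rewrite -scalemxAl mul_mx_scalar scalerA mulVf // scale1r mulmxN -scalemxAl.
  by rewrite addrC -addrA addrN addr0.
have := congr1 determinant E1; rewrite -E2 !det_mulmx det_ublock det_lblock.
rewrite det_ublock det_lblock !det1 !mul1r mulr1 => ->.
rewrite det_scalar -detZ scalerDr scalerA mulfV // scale1r scalemx1 addrC.
by [].
Qed.
Lemma quad_diag_ge0 n (d : 'rV[R]_n) v : (forall i, 0 <= d 0 i) -> 0 <= quad (diag_mx d) v.
Proof.
move=> H; rewrite /quad mul_mx_diag !mxE; apply: sumr_ge0 => i _.
rewrite !mxE mulrAC -expr2; exact: mulr_ge0 (sqr_ge0 _) (H i).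
Qed.

Definition rk n (rho : 'I_n -> R) k : 'rV[R]_n := \row_i (if (i < k)%N then rho i else 1).

Lemma core n (Q : 'M[R]_n) (c : R) (rho : 'I_n -> R) :
  (forall v, 0 <= quad Q v) -> 0 < c -> (forall i, 0 < rho i <= 1) ->
  (\prod_i rho i) * \det (Q + c%:M) <= \det (Q + c *: diag_mx (\row_i rho i)).
Proof.
move=> HQ c0 Hr.
suff : forall k : nat, (\prod_(i : 'I_n | (i < k)%N) rho i) * \det (Q + c%:M) <= \det (Q + c *: diag_mx (rk rho k)).
  have E : rk rho n = \row_i rho i by apply/rowP => i; rewrite !mxE ltn_ord.
  have P : \prod_(i : 'I_n | (i < n)%N) rho i = \prod_i rho i.
    by apply: eq_bigl => i; rewrite ltn_ord.
  by move/(_ n); rewrite E P.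
elim => [|k IH].
  rewrite big_pred0 // mul1r; rewrite le_eqVlt; apply/orP; left; apply/eqP; congr (\det (_ + _)).
  apply/matrixP => i j; rewrite !mxE /=; case: (i == j); by rewrite ?mulr1 ?mulr0.
have [kn|nk] := ltnP k n; last first.
  have E : rk rho k.+1 = rk rho k.
    apply/rowP => i; rewrite !mxE.
    have ik : (i < k)%N by apply: leq_trans (ltn_ord i) nk.
    by rewrite ik (ltn_trans ik).
  rewrite E (eq_bigl (fun i : 'I_n => (i < k)%N)) //.
  move=> i; have ik : (i < k)%N by apply: leq_trans (ltn_ord i) nk.
  by rewrite ik (ltn_trans ik).
pose i0 := Ordinal kn.
have [r0 r1] := andP (Hr i0).
rewrite (bigD1 i0) //=; rewrite (eq_bigl (fun i : 'I_n => (i < k)%N)); last first.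
  move=> i /=; rewrite -val_eqE /= ltnS leq_eqVlt andb_orl andbN /=.
  by case: (ltnP i k) => [ik|//]; rewrite (ltn_eqF ik).
pose d0 : 'rV[R]_n := \row_i (if i == i0 then 0 else rk rho k 0 i).
rewrite (@determinant_multilinear _ _ (Q + c *: diag_mx (rk rho k.+1)) (Q + c *: diag_mx d0) (Q + c *: diag_mx (rk rho k)) i0 (1 - rho i0) (rho i0)).
- have d0ge : 0 <= \det (Q + c *: diag_mx d0).
    apply: psd_det_ge0 => v; rewrite quadD quadZ; apply: addr_ge0 => //.
    apply: mulr_ge0; first exact: ltW.
    apply: quad_diag_ge0 => i; rewrite !mxE; case: eqVneq => // _.
    by case: ifP => _; [case/andP: (Hr i) => /ltW | ].
  rewrite -mulrA; apply: ler_wpDl; first by apply: mulr_ge0 => //; rewrite subr_ge0.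
  by rewrite ler_pM2l.
- apply/rowP => j; rewrite !mxE /= eqxx ltnSn ltnn.
  case: (i0 == j); rewrite ?mulr1n ?mulr0n; ring.
- apply/matrixP => a b; rewrite !mxE.
  have ne : (lift i0 a != i0) by rewrite eq_sym neq_lift.
  have nk : (nat_of_ord (lift i0 a) != k) by move: ne; rewrite -val_eqE.
  have -> : (lift i0 a < k.+1)%N = (lift i0 a < k)%N by rewrite ltnS leq_eqVlt (negbTE nk).
  by rewrite ?(negbTE ne).
- apply/matrixP => a b; rewrite !mxE.
  have ne : (lift i0 a != i0) by rewrite eq_sym neq_lift.
  have nk : (nat_of_ord (lift i0 a) != k) by move: ne; rewrite -val_eqE.
  have -> : (lift i0 a < k.+1)%N = (lift i0 a < k)%N by rewrite ltnS leq_eqVlt (negbTE nk).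
  by rewrite ?(negbTE ne).
Qed.


Lemma Mx_eq n (A : 'M[R]_n) (x : 'I_n -> R) :
  Mx A x = A *m diag_mx (\row_i x i) *m A^T.
Proof.
apply/matrixP => i j; rewrite /Mx summxE mul_mx_diag !mxE; apply: eq_bigr => k _.
rewrite !mxE big_ord1 !mxE; ring.
Qed.

Lemma quad_gram n (B : 'M[R]_n) v : 0 <= quad (B^T *m B) v.
Proof.
rewrite /quad.
have -> : v^T *m (B^T *m B) *m v = (B *m v)^T *m (B *m v) by rewrite trmx_mul !mulmxA.
rewrite mxE; apply: sumr_ge0 => i _; rewrite !mxE -expr2; exact: sqr_ge0.
Qed.

Lemma ln_le_sub1 (y : R) : 0 < y -> ln y <= y - 1.
Proof.
move=> y0; have := @le_ln1Dx R (y - 1); rewrite (addrC 1) subrK; apply.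
lra.
Qed.

Lemma ln_conc (x r : R) : 0 <= x <= 1 -> 0 < r -> (1 - x) * ln r <= ln (x + (1 - x) * r).
Proof.
move=> /andP [x0 x1] r0.
set rho := x + (1 - x) * r.
have rho0 : 0 < rho by rewrite /rho; nra.
have h1 : ln rho^-1 <= rho^-1 - 1 by apply: ln_le_sub1; rewrite invr_gt0.
have h2 : ln (r / rho) <= r / rho - 1 by apply: ln_le_sub1; exact: divr_gt0.
rewrite lnV ?posrE // in h1; rewrite ln_div ?posrE // in h2.
have id : x * (rho^-1 - 1) + (1 - x) * (r / rho - 1) = 0.
  rewrite /rho; field; rewrite -/rho; exact: lt0r_neq0.
set u := rho^-1 in h1 id; set w := r / rho in h2 id.
set a := ln rho in h1 h2 *; set b := ln r in h2 *.
nra.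
Qed.

Definition Wm n (x : 'I_n -> R) : 'M[R]_n := diag_mx (\row_i Num.sqrt (x i)).

Lemma WW n (x : 'I_n -> R) : (forall i, 0 <= x i) ->
  Wm x *m Wm x = diag_mx (\row_i x i).
Proof.
move=> H; apply/matrixP => i j; rewrite /Wm mul_diag_mx !mxE.
case: eqVneq => [->|_]; last by rewrite !mulr0n mulr0.
by rewrite !mulr1n -expr2 sqr_sqrtr.
Qed.

Lemma detY n (C A : 'M[R]_n) (t : R) (x : 'I_n -> R) :
  factor_of C t A -> 0 < t -> (forall i, 0 <= x i) ->
  \det (Mx A x + t%:M) = \det ((A *m Wm x)^T *m (A *m Wm x) + t%:M).
Proof.
move=> fA t0 H; rewrite Mx_eq -WW // mulmxA.
rewrite -[A *m Wm x *m Wm x *m A^T]mulmxA.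
have -> : Wm x *m A^T = (A *m Wm x)^T by rewrite trmx_mul /Wm tr_diag_mx.
by rewrite sylvester // lt0r_neq0.
Qed.

Lemma gramC n (C A : 'M[R]_n) (t : R) (x : 'I_n -> R) :
  factor_of C t A ->
  (A *m Wm x)^T *m (A *m Wm x) = Wm x *m (C - t%:M) *m Wm x.
Proof.
move=> fA; rewrite fA trmx_mul /Wm tr_diag_mx !mulmxA.
by [].
Qed.

Lemma Zpos n (B : 'M[R]_n) (t : R) : 0 < t -> 0 < \det (B^T *m B + t%:M).
Proof.
move=> t0; apply: pd_det_gt0 => v vn0.
rewrite quadD -scalemx1 quadZ; apply: ltr_wpDl; first exact: quad_gram.
by apply: mulr_gt0 => //; apply: quad_id_gt0.
Qed.

Lemma ln_prod n (f : 'I_n -> R) : (forall i, 0 < f i) ->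
  ln (\prod_i f i) = \sum_i ln (f i).
Proof.
move=> H.
suff [] : 0 < \prod_i f i /\ ln (\prod_i f i) = \sum_i ln (f i) by [].
apply: (big_rec2 (fun a b => 0 < b /\ ln b = a)); first by rewrite ln1.
move=> i a b _ [b0 <-]; split; first exact: mulr_gt0.
by rewrite lnM // posrE.
Qed.

Lemma perx n s (C A1 A2 : 'M[R]_n) (t1 t2 : R) (x : 'I_n -> R) :
  (s <= n)%N -> feasible s x -> 0 < t1 -> t1 <= t2 ->
  factor_of C t1 A1 -> factor_of C t2 A2 ->
  ln (\det (Mx A2 x + t2%:M)) - (n - s)%:R * ln t2
    <= ln (\det (Mx A1 x + t1%:M)) - (n - s)%:R * ln t1.
Proof.
move=> sn [Hx Hs] t10 t12 f1 f2.
have x0 i : 0 <= x i by case/andP: (Hx i).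
have x1 i : x i <= 1 by case/andP: (Hx i).
have t20 : 0 < t2 by apply: lt_le_trans t12.
have Z1p := Zpos (A1 *m Wm x) t10.
have Z2p := Zpos (A2 *m Wm x) t20.
rewrite (detY f1) // (detY f2) //.
rewrite (gramC _ f1) (gramC _ f2) in Z1p Z2p *.
set Q := Wm x *m (C - t2%:M) *m Wm x in Z2p *.
set r := t1 / t2.
have r0 : 0 < r by apply: divr_gt0.
have r1 : r <= 1 by rewrite ler_pdivrMr // mul1r.
pose rho i := x i + (1 - x i) * r.
have rho0 i : 0 < rho i <= 1.
  have := x0 i; have := x1 i; rewrite /rho => a b; apply/andP; split; nra.
have EZ1 : Wm x *m (C - t1%:M) *m Wm x + t1%:M = Q + t2 *: diag_mx (\row_i rho i).
  have -> : C - t1%:M = (C - t2%:M) + (t2 - t1)%:M by rewrite raddfB /= addrA subrK.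
  rewrite mulmxDr mulmxDl -/Q mul_mx_scalar -scalemxAl WW // -addrA; congr (_ + _).
  apply/matrixP => i j; rewrite !mxE; case: eqVneq => _; rewrite ?mulr1n ?mulr0n; last by rewrite !mulr0 addr0.
  rewrite /rho /r; field; exact: lt0r_neq0.
have Hcore := @core n Q t2 rho _ t20 rho0.
have QP : forall v, 0 <= quad Q v by move=> v; rewrite /Q -(gramC _ f2); exact: quad_gram.
move/(_ QP): Hcore => Hcore.
rewrite EZ1 in Z1p *.
have P0 : 0 < \prod_i rho i by apply: prodr_gt0 => i _; case/andP: (rho0 i).
have Hl : ln (\prod_i rho i * \det (Q + t2%:M)) <= ln (\det (Q + t2 *: diag_mx (\row_i rho i))).
  by rewrite ler_ln // posrE // mulr_gt0.
rewrite lnM ?posrE // ln_prod in Hl; last by move=> i; case/andP: (rho0 i).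
have Hn : \sum_i (1 - x i) = (n - s)%:R.
  by rewrite sumrB sumr_const card_ord Hs natrB.
have Hsum : (n - s)%:R * (ln t1 - ln t2) <= \sum_i ln (rho i).
  rewrite -Hn big_distrl /=; apply: ler_sum => i _.
  rewrite -ln_div ?posrE //; apply: ln_conc => //; by rewrite x0 x1.
lra.
Qed.

Lemma det_bound n (M : 'M[R]_n) (K : R) : 0 <= K -> (forall i j, `|M i j| <= K) ->
  \det M <= (n`!)%:R * K ^+ n.
Proof.
move=> K0 HK; apply: le_trans (ler_norm _) _.
rewrite /determinant; apply: le_trans (ler_norm_sum _ _ _) _.
rewrite -card_Sn.
have -> : (#|'S_n|)%:R * K ^+ n = \sum_(p : 'S_n) K ^+ n.
  by rewrite sumr_const mulr_natl.
apply: ler_sum => p _.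
rewrite normrM normr_sign mul1r normr_prod.
have -> : K ^+ n = \prod_(i < n) K by rewrite prodr_const card_ord.
by apply: ler_prod => i _; rewrite normr_ge0 HK.
Qed.

Lemma term_le_sum n (F : 'I_n -> R) i0 : (forall i, 0 <= F i) -> F i0 <= \sum_i F i.
Proof.
move=> H; rewrite (bigD1 i0) //= ler_wpDr //; exact: sumr_ge0.
Qed.

Lemma entry_bound n (A : 'M[R]_n) (t : R) (x : 'I_n -> R) : 0 <= t ->
  (forall i, 0 <= x i <= 1) ->
  forall i j, `|(Mx A x + t%:M) i j| <=
     (\sum_i \sum_k `|A i k|) * (\sum_i \sum_k `|A i k|) + t.
Proof.
move=> t0 Hx i j; set a := \sum_i \sum_k `|A i k|.
have ha : forall i k, `|A i k| <= a.
  move=> i' k; apply: le_trans (term_le_sum (F := fun i => \sum_k `|A i k|) i' _).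
    exact: (term_le_sum (F := fun k => `|A i' k|)).
  by move=> ?; apply: sumr_ge0.
have a0 : 0 <= a by apply: le_trans (ha i j).
rewrite !mxE; apply: le_trans (ler_normD _ _) _; apply: lerD; last first.
  by case: (i == j); rewrite ?mulr1n ?mulr0n ?normr0 // ger0_norm.
rewrite summxE; apply: le_trans (ler_norm_sum _ _ _) _.
apply: (@le_trans _ _ (\sum_k `|A i k| * a)).
  apply: ler_sum => k _; rewrite !mxE big_ord1 !mxE normrM normrM.
  have [x0 x1] := andP (Hx k).
  have p := mulr_ge0 (normr_ge0 (A i k)) (normr_ge0 (A j k)).
  have := ha j k; have := normr_ge0 (A i k); rewrite (ger0_norm x0); nra.
rewrite -big_distrl /=; apply: ler_wpM2r => //.
apply: (term_le_sum (F := fun i => \sum_k `|A i k|)) => ?; exact: sumr_ge0.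
Qed.

Lemma sup_shift (S1 S2 : set R) (c : R) : (exists y, S2 y) ->
  (exists K, forall y, S1 y -> y <= K) ->
  (forall y, S2 y -> exists y', S1 y' /\ y <= y' + c) -> sup S2 <= sup S1 + c.
Proof.
move=> [y0 S2y0] [K HK] H.
apply: ge_sup; first by exists y0.
move=> y /H [y' [S1y' le]]; apply: le_trans le _; rewrite lerD2r.
apply: ub_le_sup => //; by exists K => z /HK.
Qed.

Lemma feas_ex n s : (s <= n)%N -> feasible (R:=R) s (fun i : 'I_n => if (i < s)%N then 1 else 0).
Proof.
move=> sn; split.
  by move=> i; case: ifP => _; rewrite ?lexx ?ler01.
rewrite -(big_mkord xpredT (fun i => if (i < s)%N then (1:R) else 0)).
rewrite (@big_cat_nat _ _ _ s 0 n) //=.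
rewrite (eq_big_nat _ _ (F2 := fun _ => 1)); last by move=> i /andP [_ ->].
rewrite [X in _ + X](eq_big_nat _ _ (F2 := fun _ => 0)); last first.
  by move=> i /andP [si _]; rewrite ltnNge si.
by rewrite !sumr_const_nat subn0 mul0rn addr0.
Qed.

Lemma detpos n s (C A : 'M[R]_n) (t : R) (x : 'I_n -> R) :
  feasible s x -> 0 < t -> factor_of C t A -> 0 < \det (Mx A x + t%:M).
Proof.
move=> [Hx _] t0 fA; rewrite (detY fA) //; first exact: Zpos.
by move=> i; case/andP: (Hx i).
Qed.
End Aux.

Unset Implicit Arguments. Set Strict Implicit.
Theorem proposition3 (R : realType) (n s : nat) (C : 'M[R]_n) (lam : R)
  (t1 t2 : R) (A1 A2 : 'M[R]_n) :
  (1 <= n)%N -> (1 <= s <= n)%N ->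
  sym_mx C -> posdef_mx C -> is_lambda_min C lam ->
  0 < t1 -> t1 <= t2 -> t2 <= lam ->
  factor_of C t1 A1 -> factor_of C t2 A2 ->
  zhatD s A2 t2 <= zhatD s A1 t1.
Proof.
move=> n1 /andP [s1 sn] _ _ _ t10 t12 _ f1 f2.
have t20 : 0 < t2 by apply: lt_le_trans t12.
rewrite /zhatD.
set m := (n - s)%:R.
pose a := \sum_i \sum_k `|A1 i k|.
have fin : forall u v c1 c2 : R, u <= v + (c1 - c2) -> u - c1 <= v - c2 by move=> *; lra.
apply: fin; apply: sup_shift.
  - exists (ln (\det (Mx A2 (fun i : 'I_n => if (i < s)%N then 1 else 0) + t2%:M))).
    exists (fun i : 'I_n => if (i < s)%N then 1 else 0); split => //; exact: feas_ex.
  - exists ((n`!)%:R * (a * a + t1) ^+ n) => y [x [fx ->]].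
    have dp := detpos fx t10 f1.
    apply: le_trans (ltW (ln_sublinear dp)) _.
    apply: det_bound; first by apply: addr_ge0; [apply: mulr_ge0; apply: sumr_ge0 => i _; apply: sumr_ge0 | exact: ltW].
    apply: entry_bound; [exact: ltW | by case: fx].
  - move=> y [x [fx ->]]; exists (ln (\det (Mx A1 x + t1%:M))); split; first by exists x.
    have := perx sn fx t10 t12 f1 f2; rewrite -/m; lra.
Qed.
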